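(* Let $(X,d,\mu)$ be an unbounded space of homogeneous type with geometric constants $\tau$ and $A$, let $0<\gamma<\tfrac1\tau$, $H\geq1$, and let $\mathcal{K}$ be a family of symmetric Markov kernels on $X$ with $\mathcal{K}\subset\mathcal{H}(\gamma,H)$. For $K\in\mathcal{K}$ define $\widetilde K(x,x)=K(x,x)$ and, for $x\neq y$, \[\widetilde K(x,y)=\frac{1}{\mu(B(y,\gamma d(x,y)))}\int_{B(y,\gamma d(x,y))}K(x,z)\,d\mu(z).\] Then for every $K\in\mathcal{K}$ and every $(x,y)\in X\times X$, $K(x,y)\leq H\widetilde K(x,y)\leq H^2K(x,y)$.
   Context: A quasi-distance on $X$ is a nonnegative symmetric function $d$ vanishing exactly on the diagonal with $d(x,z)\leq\tau[d(x,y)+d(y,z)]$, $\tau\geq1$; balls are $B(x,r)=\{y:d(x,y)<r\}$. $(X,d,\mu)$ is a space of homogeneous type if $\mu$ is a positive measure on a $\sigma$-algebra containing all balls with $0<\mu(B(x,2r))\leq A\mu(B(x,r))<\infty$; $\tau,A$ are the geometric constants; unbounded means $\mu(X)=\infty$. A symmetric Markov kernel is a nonnegative symmetric measurable $K$ on $X\times X$ with $\int_XK(x,y)d\mu(y)=1$ for all $x$. $K\in\mathcal{H}(\gamma,H)$ means $\sup_{\eta\in B(y,\gamma d(x,y))}K(x,\eta)\leq H\inf_{\eta\in B(y,\gamma d(x,y))}K(x,\eta)$ for all $x\neq y$. *)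

(* Defs.v *)
From HB Require Import structures.
From mathcomp Require Import all_boot all_order all_algebra.
From mathcomp Require Import all_classical all_reals all_analysis.
Set Implicit Arguments. Unset Strict Implicit. Unset Printing Implicit Defensive.
Import Order.TTheory GRing.Theory Num.Theory.
Local Open Scope classical_set_scope.
Local Open Scope ring_scope.

Section Defs.
Context {d : measure_display} {X : measurableType d} {R : realType}.

Definition qball (dist : X -> X -> R) (x : X) (r : R) : set X :=
  [set y | dist x y < r].

Definition quasi_distance (dist : X -> X -> R) (tau : R) : Prop :=
  1 <= tau /\
  (forall x y, 0 <= dist x y) /\
  (forall x y, dist x y = dist y x) /\
  (forall x y, dist x y = 0 <-> x = y) /\
  (forall x y z, dist x z <= tau * (dist x y + dist y z)).

Definition homogeneous_type (dist : X -> X -> R) (mu : {measure set X -> \bar R})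
  (tau A : R) : Prop :=
  quasi_distance dist tau /\
  (forall x r, measurable (qball dist x r)) /\
  (forall x r, 0 < r ->
     (0 < mu (qball dist x (2 * r)))%E /\
     (mu (qball dist x (2 * r)) <= A%:E * mu (qball dist x r))%E /\
     (mu (qball dist x r) < +oo)%E).

Definition unbounded_space (mu : {measure set X -> \bar R}) : Prop :=
  mu setT = +oo%E.

Definition sym_markov_kernel (mu : {measure set X -> \bar R}) (K : X -> X -> R)
  : Prop :=
  (forall x y, 0 <= K x y) /\
  (forall x y, K x y = K y x) /\
  measurable_fun setT (fun p : X * X => K p.1 p.2) /\
  (forall x, (\int[mu]_(y in setT) (K x y)%:E)%E = 1%E).

Definition class_H (dist : X -> X -> R) (gamma H : R) (K : X -> X -> R) : Prop :=
  forall x y, x <> y ->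
    (ereal_sup [set (K x eta)%:E | eta in qball dist y (gamma * dist x y)]
     <= H%:E * ereal_inf [set (K x eta)%:E | eta in qball dist y (gamma * dist x y)])%E.

Definition Ktilde (dist : X -> X -> R) (mu : {measure set X -> \bar R})
  (gamma : R) (K : X -> X -> R) (x y : X) : \bar R :=
  if pselect (x = y) then (K x x)%:E
  else (((fine (mu (qball dist y (gamma * dist x y))))^-1)%:E *
       \int[mu]_(z in qball dist y (gamma * dist x y)) (K x z)%:E)%E.

End Defs.

(* Main.v *)
Require Import Defs.
From HB Require Import structures.
From mathcomp Require Import all_boot all_order all_algebra.
From mathcomp Require Import all_classical all_reals all_analysis.
From mathcomp Require Import ring lra.
From mathcomp Require Import measurable_realfun.
Import Order.TTheory GRing.Theory Num.Theory.
Local Open Scope classical_set_scope.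
Local Open Scope ring_scope.

Theorem lemma4p2 (R : realType) (d : measure_display) (X : measurableType d)
  (dist : X -> X -> R) (mu : {measure set X -> \bar R}) (tau A gamma H : R)
  (Kfam : set (X -> X -> R)) :
  homogeneous_type dist mu tau A ->
  unbounded_space mu ->
  0 < gamma -> gamma < tau^-1 -> 1 <= H ->
  (forall K, Kfam K -> sym_markov_kernel mu K) ->
  (forall K, Kfam K -> class_H dist gamma H K) ->
  forall K, Kfam K -> forall x y : X,
    ((K x y)%:E <= H%:E * Ktilde dist mu gamma K x y)%E /\
    (H%:E * Ktilde dist mu gamma K x y <= (H ^+ 2)%:E * (K x y)%:E)%E.
Proof.
move=> [[_ [d0 [_ [deq _]]]] [mball hball]] _ g0 _ H1 Hsym HcH K KK x y.
have [K0 [_ [mK _]]] := Hsym K KK.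
have H0 : 0 < H by lra.
rewrite /Ktilde; case: pselect => [e|xy].
  subst y.
  have := K0 x x => Kx; have h1 : 0 <= H - 1 by lra.
  have := mulr_ge0 (ltW H0) (mulr_ge0 h1 Kx).
  have := mulr_ge0 h1 Kx.
  split; rewrite -EFinM lee_fin ?expr2; nra.
set r := gamma * dist x y.
set B := qball dist y r.
have dpos : 0 < dist x y.
  rewrite lt_neqAle d0 andbT; apply/eqP => /esym /deq; exact: xy.
have rpos : 0 < r by rewrite /r mulr_gt0.
have mB : measurable B by exact: mball.
have [_ [_ mu_fin]] := hball y r rpos.
have [mu_pos _] := hball y (r / 2) (divr_gt0 rpos (ltr0Sn _ 1)).
have e2 : 2 * (r / 2) = r by field.
rewrite e2 in mu_pos.
have Bbnd : forall z1 z2, B z1 -> B z2 -> K x z1 <= H * K x z2.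
  move=> z1 z2 Bz1 Bz2.
  have Hc := HcH K KK x y xy.
  rewrite -lee_fin EFinM.
  apply: (le_trans _ (le_trans Hc _)).
    by apply: ereal_sup_ubound; exists z1.
  rewrite lee_pmul2l ?lte_fin //.
  by apply: ereal_inf_lbound; exists z2.
have By : B y.
  rewrite /B /qball /=; have -> : dist y y = 0 by apply/deq.
  exact: rpos.
set m := fine (mu B).
have muB : mu B = m%:E by rewrite fineK // ge0_fin_numE.
have mpos : 0 < m by rewrite -lte_fin -muB.
have mf : measurable_fun B (EFin \o K x).
  apply/measurable_EFinP; apply: measurable_funTS.
  exact: (measurable_fun_pair2 x mK).
set I := (\int[mu]_(z in B) (K x z)%:E)%E.
have I0 : (0 <= I)%E by apply: integral_ge0 => z _; rewrite lee_fin.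
have low : ((K x y * m)%:E <= H%:E * I)%E.
  rewrite EFinM -muB -integral_cst // /I -ge0_integralZl //; try (by move=> z _; rewrite lee_fin);
    try (by rewrite lee_fin ltW).
  apply: ge0_le_integral => //.
  - by move=> z _; rewrite lee_fin.
  - apply: measurable_funeM; exact: mf.
  - by move=> z Bz; rewrite -EFinM lee_fin; apply: Bbnd.
have up : (I <= (H * K x y * m)%:E)%E.
  rewrite EFinM -muB -integral_cst // /I.
  apply: ge0_le_integral => //.
  - by move=> z _; rewrite lee_fin.
  - by move=> z Bz; rewrite lee_fin; apply: Bbnd.
have Ifin : I \is a fin_num.
  by rewrite ge0_fin_numE //; apply: le_lt_trans up _; rewrite ltry.
rewrite -(fineK Ifin) in low up *.
set i := fine I in low up *.
rewrite lee_fin in low; rewrite lee_fin in up.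
have Kxy := K0 x y.
rewrite -!EFinM !lee_fin.
have mi : m^-1 * i = i / m by rewrite mulrC.
rewrite mi; split.
  by rewrite mulrA ler_pdivlMr.
rewrite mulrA ler_pdivrMr //.
have -> : H ^+ 2 * K x y * m = H * (H * K x y * m) by rewrite expr2 -!mulrA.
by rewrite ler_wpM2l // ltW.
Qed.
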